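(* In the two-period, four-sequence crossover design ($\mathcal{S}^{\mathrm{obs}}=\{AA,AB,BA,BB\}$, all $N_{\vec z}\ge1$) under complete randomization, suppose Assumption 1 holds and Assumptions 2 and 3 hold with $k=1$, so that $\tau_1=\tau_2(A)=\tau_2(B)=:\tau$. Then the BLUE of $\tau$ is $\widehat\tau=\sum_{t=1}^2\sum_{\vec z\in\mathcal{S}^{\mathrm{obs}}}\tilde w^*_t(\vec z)\widehat Y_t(\vec z)$, where the weights $\tilde w^*$ minimize $$f(\tilde w)=\sum_{z_1\in\{A,B\}}\Big\{\tfrac{\tilde w_1(z_1A)^2}{N_{z_1A}}+\tfrac{\tilde w_1(z_1B)^2}{N_{z_1B}}\Big\}S_1^2(z_1)+\sum_{z_2\in\{A,B\}}\Big\{\tfrac{\tilde w_2(Az_2)^2}{N_{Az_2}}+\tfrac{\tilde w_2(Bz_2)^2}{N_{Bz_2}}\Big\}S_2^2(z_2)+\sum_{z_1,z_2\in\{A,B\}}\tfrac{2\tilde w_1(z_1z_2)\tilde w_2(z_1z_2)S_{12}(z_1z_2)}{N_{z_1z_2}}$$ subject to the linear constraints $\tilde w_1(AA)+\tilde w_1(AB)+\tilde w_1(BA)+\tilde w_1(BB)=0$, $\tilde w_2(AA)+\tilde w_2(AB)+\tilde w_2(BA)+\tilde w_2(BB)=0$, and $\tilde w_1(AA)+\tilde w_1(AB)+\tilde w_2(AA)+\tilde w_2(BA)=1$.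
   Context: Setup: $N$ units, treatments $A,B$, $T$ periods; sequences $\vec z\in\{A,B\}^T$, $\vec z_{[t_1,t_2]}=z_{t_1}\cdots z_{t_2}$. Complete randomization with fixed positive group sizes $N_{\vec z}$ for $\vec z\in\mathcal{S}^{\mathrm{obs}}$; fixed potential outcomes $Y_{it}(\vec z)$, observed $Y_{it}=Y_{it}(\vec Z_i)$; randomness only from assignment. $\bar Y_t(\vec z)=N^{-1}\sum_iY_{it}(\vec z)$, $\widehat Y_t(\vec z)=N_{\vec z}^{-1}\sum_iY_{it}\mathbf1(\vec Z_i=\vec z)$. Assumption 1: $Y_{it}(\vec z)=Y_{it}(\vec z')$ whenever $\vec z_{[1,t]}=\vec z'_{[1,t]}$. Assumption 2 (order $k$): $Y_{it}(\vec z)=Y_{it}(\vec z')$ whenever $\vec z_{[\max(1,t-k+1),t]}=\vec z'_{[\max(1,t-k+1),t]}$; then $Y_{it}$ is a function $Y_{it}(a)$ of the window $a=\vec z_{[t-k+1,t]}$ for $t\ge k$. Assumption 3 (order $k$, requires Assumption 2 with same $k$): for all $a,b\in\{A,B\}^k$ and all $t'>t\ge k$, $Y_{it}(a)-Y_{it}(b)=Y_{it'}(a)-Y_{it'}(b)$. For $k=1,T=2$ this says $Y_{i1}(A)-Y_{i1}(B)=Y_{i2}(A)-Y_{i2}(B)$. Estimands: $\tau_1=\bar Y_1(A)-\bar Y_1(B)$, $\tau_2(z_1)=\bar Y_2(z_1A)-\bar Y_2(z_1B)$. Variance notation (divisor $N-1$): $S_t^2(\vec z)=\frac1{N-1}\sum_i\{Y_{it}(\vec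 z)-\bar Y_t(\vec z)\}^2$, $S_{12}(\vec z)=\frac1{N-1}\sum_i\{Y_{i1}(\vec z)-\bar Y_1(\vec z)\}\{Y_{i2}(\vec z)-\bar Y_2(\vec z)\}$; $S_1^2(z_1)$ denotes the common value $S_1^2(z_1A)=S_1^2(z_1B)$ and $S_2^2(z_2)$ the common value $S_2^2(Az_2)=S_2^2(Bz_2)$ (equal under the assumptions). A linear estimator is $\sum_{t}\sum_{\vec z\in\mathcal{S}^{\mathrm{obs}}}\tilde w_t(\vec z)\widehat Y_t(\vec z)$ with non-random weights; unbiased means expectation equals the estimand for every finite population satisfying the assumptions; BLUE means unbiased with variance, for the given population, no larger than any other unbiased linear estimator. *)

(* Defs.v *)
From HB Require Import structures.
From mathcomp Require Import all_boot all_order all_algebra.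
Set Implicit Arguments. Unset Strict Implicit. Unset Printing Implicit Defensive.
Import Order.TTheory GRing.Theory Num.Theory.
Local Open Scope ring_scope.

Notation trA := true.
Notation trB := false.
Definition tseq := (bool * bool)%type.

Definition p1 : 'I_2 := @Ordinal 2 0 isT.
Definition p2 : 'I_2 := @Ordinal 2 1 isT.

Definition trt_at (z : tseq) (t : 'I_2) : bool := if val t == 0%N then z.1 else z.2.

Section Design.
Variable R : realFieldType.
Variable N : nat.
Variable Nz : tseq -> nat.

Definition pot_outcomes := 'I_N -> 'I_2 -> tseq -> R.

Definition assumption1 (Y : pot_outcomes) : Prop :=
  forall i (z z' : tseq), z.1 = z'.1 -> Y i p1 z = Y i p1 z'.

Definition assumption2_k1 (Y : pot_outcomes) : Prop :=
  forall i t (z z' : tseq), trt_at z t = trt_at z' t -> Y i t z = Y i t z'.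

(* Assumption 3 with k = 1 (T = 2): for windows a b,
   Y_{i1}(a) - Y_{i1}(b) = Y_{i2}(a) - Y_{i2}(b), where Y_{it}(a) is the
   value at any sequence whose period-t entry is a. *)
Definition assumption3_k1 (Y : pot_outcomes) : Prop :=
  forall i (a b : bool) (z z' u u' : tseq),
    z.1 = a -> z'.1 = b -> u.2 = a -> u'.2 = b ->
    Y i p1 z - Y i p1 z' = Y i p2 u - Y i p2 u'.

Definition assumptions (Y : pot_outcomes) : Prop :=
  [/\ assumption1 Y, assumption2_k1 Y & assumption3_k1 Y].

(* Complete randomization: uniform over assignments with fixed group sizes. *)
Definition assignments : {set {ffun 'I_N -> tseq}} :=
  [set Z : {ffun 'I_N -> tseq} | [forall z : tseq, #|[set i : 'I_N | Z i == z]| == Nz z]].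

Definition Expect (X : {ffun 'I_N -> tseq} -> R) : R :=
  (#|assignments|%:R)^-1 * \sum_(Z in assignments) X Z.

Definition Var (X : {ffun 'I_N -> tseq} -> R) : R :=
  Expect (fun Z => (X Z - Expect X) ^+ 2).

Definition Ybar (Y : pot_outcomes) (t : 'I_2) (z : tseq) : R :=
  (N%:R)^-1 * \sum_(i < N) Y i t z.

Definition Yhat (Y : pot_outcomes) (t : 'I_2) (z : tseq)
    (Z : {ffun 'I_N -> tseq}) : R :=
  ((Nz z)%:R)^-1 * \sum_(i < N) Y i t (Z i) * (Z i == z)%:R.

(* weights \tilde w_t(z), over S^obs = {AA, AB, BA, BB} = all of tseq *)
Definition weights := 'I_2 -> tseq -> R.

Definition lin_est (Y : pot_outcomes) (w : weights) (Z : {ffun 'I_N -> tseq}) : R :=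
  \sum_(t < 2) \sum_(z : tseq) w t z * Yhat Y t z Z.

(* estimand tau = tau_1 = \bar Y_1(A) - \bar Y_1(B) (representatives AA, BA;
   by Assumption 1 any representatives give the same value) *)
Definition tau (Y : pot_outcomes) : R := Ybar Y p1 (trA, trA) - Ybar Y p1 (trB, trA).

Definition unbiased (w : weights) : Prop :=
  forall Y' : pot_outcomes, assumptions Y' -> Expect (lin_est Y' w) = tau Y'.

Definition BLUE (Y : pot_outcomes) (w : weights) : Prop :=
  unbiased w /\
  forall w' : weights, unbiased w' -> Var (lin_est Y w) <= Var (lin_est Y w').

Definition S2 (Y : pot_outcomes) (t : 'I_2) (z : tseq) : R :=
  ((N.-1)%:R)^-1 * \sum_(i < N) (Y i t z - Ybar Y t z) ^+ 2.

Definition S12 (Y : pot_outcomes) (z : tseq) : R :=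
  ((N.-1)%:R)^-1 *
    \sum_(i < N) (Y i p1 z - Ybar Y p1 z) * (Y i p2 z - Ybar Y p2 z).

Definition S2_1 (Y : pot_outcomes) (z1 : bool) : R := S2 Y p1 (z1, trA).
Definition S2_2 (Y : pot_outcomes) (z2 : bool) : R := S2 Y p2 (trA, z2).

Definition Nr (z : tseq) : R := (Nz z)%:R.

Definition f_obj (Y : pot_outcomes) (w : weights) : R :=
  \sum_(z1 : bool)
     ((w p1 (z1, trA)) ^+ 2 / Nr (z1, trA) + (w p1 (z1, trB)) ^+ 2 / Nr (z1, trB))
       * S2_1 Y z1
  + \sum_(z2 : bool)
     ((w p2 (trA, z2)) ^+ 2 / Nr (trA, z2) + (w p2 (trB, z2)) ^+ 2 / Nr (trB, z2))
       * S2_2 Y z2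
  + \sum_(z1 : bool) \sum_(z2 : bool)
      2 * w p1 (z1, z2) * w p2 (z1, z2) * S12 Y (z1, z2) / Nr (z1, z2).

Definition constraints (w : weights) : Prop :=
  [/\ w p1 (trA, trA) + w p1 (trA, trB) + w p1 (trB, trA) + w p1 (trB, trB) = 0,
      w p2 (trA, trA) + w p2 (trA, trB) + w p2 (trB, trA) + w p2 (trB, trB) = 0 &
      w p1 (trA, trA) + w p1 (trA, trB) + w p2 (trA, trA) + w p2 (trB, trA) = 1].

End Design.

(* Main.v *)
Require Import Defs.
From HB Require Import structures.
From mathcomp Require Import all_boot all_order all_algebra all_fingroup.
From mathcomp Require Import ring lra zify.
Import Order.TTheory GRing.Theory Num.Theory.
Local Open Scope ring_scope.

Lemma perm_assign N Nz (s : {perm 'I_N}) (Z : {ffun 'I_N -> tseq}) :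
  ([ffun i => Z (s i)] \in assignments N Nz) = (Z \in assignments N Nz).
Proof.
rewrite !inE; apply: eq_forallb => z; congr (_ == _).
rewrite -(card_preimset [set i | Z i == z] (@perm_inj _ s)).
by apply: eq_card => i; rewrite !inE ffunE.
Qed.

Lemma sum_perm (R : realFieldType) N Nz (s : {perm 'I_N}) (F : {ffun 'I_N -> tseq} -> R) :
  \sum_(Z in assignments N Nz) F Z = \sum_(Z in assignments N Nz) F [ffun i => Z (s i)].
Proof.
rewrite (reindex (fun Z : {ffun 'I_N -> tseq} => [ffun i => Z (s i)])) /=.
  by apply: eq_bigl => Z; rewrite perm_assign.
apply: onW_bij; exists (fun Z : {ffun 'I_N -> tseq} => [ffun i => Z ((s^-1)%g i)]) => Z;
  by apply/ffunP => i; rewrite !ffunE ?permK ?permKV.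
Qed.

Lemma sum_ind (R : realFieldType) N Nz (Z : {ffun 'I_N -> tseq}) z :
  Z \in assignments N Nz -> \sum_(i < N) ((Z i == z)%:R : R) = (Nz z)%:R.
Proof.
rewrite inE => /forallP /(_ z) /eqP <-.
rewrite (eq_bigr (fun i => if Z i == z then 1 else 0)); last by move=> i _; case: eqP.
rewrite -big_mkcond sumr_const; congr (_ *+ _).
by apply: eq_card => i; rewrite !inE.
Qed.

Lemma L1 (R : realFieldType) N Nz (i : 'I_N) z :
  N%:R * \sum_(Z in assignments N Nz) ((Z i == z)%:R : R) =
  #|assignments N Nz|%:R * (Nz z)%:R.
Proof.
have H j : \sum_(Z in assignments N Nz) ((Z i == z)%:R : R) =
           \sum_(Z in assignments N Nz) ((Z j == z)%:R : R).
  rewrite (sum_perm _ _ _ (tperm i j)); apply: eq_bigr => Z _.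
  by rewrite ffunE tpermL.
transitivity (\sum_(j < N) \sum_(Z in assignments N Nz) ((Z j == z)%:R : R)).
  by rewrite (eq_bigr _ (fun j _ => esym (H j))) sumr_const card_ord mulr_natl.
rewrite exchange_big /= (eq_bigr (fun _ => (Nz z)%:R)); last by move=> Z HZ; rewrite (sum_ind _ _ _ _ _ HZ).
by rewrite sumr_const mulr_natl.
Qed.

Lemma L2 (R : realFieldType) N Nz (i j : 'I_N) z z' : i != j ->
  (N.-1)%:R * \sum_(Z in assignments N Nz) ((Z i == z)%:R * (Z j == z')%:R : R) =
  ((Nz z')%:R - (z == z')%:R) * \sum_(Z in assignments N Nz) ((Z i == z)%:R : R).
Proof.
move=> nij.
have H k : k != i -> \sum_(Z in assignments N Nz) ((Z i == z)%:R * (Z j == z')%:R : R) =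
           \sum_(Z in assignments N Nz) ((Z i == z)%:R * (Z k == z')%:R : R).
  move=> nki; rewrite (sum_perm _ _ _ (tperm j k)); apply: eq_bigr => Z _.
  rewrite !ffunE tpermL tpermD //; rewrite eq_sym //.
transitivity (\sum_(k | k != i) \sum_(Z in assignments N Nz) ((Z i == z)%:R * (Z k == z')%:R : R)).
  rewrite (eq_bigr _ (fun k nki => esym (H k nki))) sumr_const mulr_natl.
  congr (_ *+ _).
  have -> : #|[pred k | k != i]| = #|predC1 i| by apply: eq_card.
  by rewrite cardC1 card_ord.
rewrite exchange_big mulr_sumr /=; apply: eq_bigr => Z HZ.
rewrite -mulr_sumr -(sum_ind _ _ _ _ z' HZ) [in RHS](bigD1 i) //=.
case: (eqVneq (Z i) z) => [->|ne]; last by rewrite mul0r mulr0.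
by rewrite mul1r mulr1 addrAC subrr add0r.
Qed.

Lemma assign_nonempty N Nz : (\sum_(z : tseq) Nz z)%N = N ->
  exists Z : {ffun 'I_N -> tseq}, Z \in assignments N Nz.
Proof.
move=> Hs.
set s := flatten [seq nseq (Nz x) x | x <- index_enum tseq].
have Hsz : size s = N.
  rewrite size_flatten /shape -map_comp sumnE big_map.
  rewrite -Hs; apply: eq_big => // x; by rewrite /= size_nseq.
exists [ffun i : 'I_N => nth (true, true) s i].
rewrite inE; apply/forallP => z; apply/eqP.
transitivity (count_mem z s).
  rewrite -sum1_card -sum1_count (big_nth (true,true)) Hsz big_mkord.
  by apply: eq_bigl => i; rewrite !inE ffunE.
rewrite count_flatten sumnE big_map /=.
rewrite big_map (bigD1 z) //= count_nseq.
have -> : pred1 z z = true by apply/eqP.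
rewrite mul1n big1 ?addn0 // => x nx.
rewrite count_nseq; have -> : pred1 z x = false by apply/eqP=> e; move: nx; rewrite e eqxx.
by [].
Qed.

Lemma sum_pick (R : realFieldType) (x : tseq) (K : tseq -> R) :
  \sum_(z : tseq) (x == z)%:R * K z = K x.
Proof.
rewrite (bigD1 x) //= eqxx mul1r big1 ?addr0 // => z nz.
by rewrite eq_sym (negbTE nz) mul0r.
Qed.

Lemma E1 (R : realFieldType) N Nz (i : 'I_N) (G : tseq -> R) :
  N%:R * \sum_(Z in assignments N Nz) G (Z i) =
  #|assignments N Nz|%:R * \sum_(z : tseq) G z * (Nz z)%:R.
Proof.
rewrite (eq_bigr (fun Z : {ffun 'I_N -> tseq} => \sum_(z : tseq) (Z i == z)%:R * G z)); last first.
  by move=> Z _; rewrite sum_pick.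
rewrite exchange_big /= !mulr_sumr; apply: eq_bigr => z _.
rewrite -mulr_suml mulrA L1; ring.
Qed.

Lemma E2 (R : realFieldType) N Nz (i j : 'I_N) (G H : tseq -> R) : i != j ->
  (N.-1)%:R * (N%:R * \sum_(Z in assignments N Nz) G (Z i) * H (Z j)) =
  #|assignments N Nz|%:R * \sum_(z : tseq) \sum_(z' : tseq)
     G z * H z' * ((Nz z)%:R * ((Nz z')%:R - (z == z')%:R)).
Proof.
move=> nij.
rewrite (eq_bigr (fun Z : {ffun 'I_N -> tseq} => \sum_(z : tseq) \sum_(z' : tseq)
    ((Z i == z)%:R * (Z j == z')%:R) * (G z * H z'))); last first.
  move=> Z _; rewrite -(sum_pick _ (Z i) G) mulr_suml; apply: eq_bigr => z _.
  rewrite -(sum_pick _ (Z j) H) mulr_sumr; apply: eq_bigr => z' _; ring.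
rewrite exchange_big /= !mulr_sumr; apply: eq_bigr => z _.
rewrite exchange_big /= !mulr_sumr; apply: eq_bigr => z' _.
rewrite -mulr_suml.
transitivity ((N.-1)%:R * (\sum_(Z in assignments N Nz) ((Z i == z)%:R * (Z j == z')%:R : R)) * N%:R * (G z * H z')); first by ring.
rewrite L2 // -(mulrA _ _ N%:R) [_ * N%:R]mulrC L1; ring.
Qed.

Lemma sum_tseq (R : realFieldType) (F : tseq -> R) :
  \sum_(z : tseq) F z = F (true, true) + F (true, false) + F (false, true) + F (false, false).
Proof.
rewrite (eq_bigr (fun z => F (z.1, z.2))); last by case.
rewrite -(pair_bigA _ (fun a b => F (a, b))) /= !big_bool /=; ring.
Qed.

Lemma sum_tseq_nat (F : tseq -> nat) :
  (\sum_(z : tseq) F z = F (true, true) + F (true, false) + F (false, true) + F (false, false))%N.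
Proof.
rewrite (eq_bigr (fun z => F (z.1, z.2))); last by case.
by rewrite -(pair_bigA _ (fun a b => F (a, b))) /= !big_bool /= !addnA.
Qed.

Lemma sqr_sum (R : realFieldType) N (u : 'I_N -> R) :
  (\sum_(i < N) u i) ^+ 2 = \sum_(i < N) (u i ^+ 2 + \sum_(j < N | j != i) u i * u j).
Proof.
rewrite expr2 big_distrl /=; apply: eq_bigr => i _.
by rewrite big_distrr /= (bigD1 i) //= expr2.
Qed.

Lemma VarCore (R : realFieldType) N Nz (h : 'I_N -> tseq -> R) :
  (forall z, (0 < Nz z)%N) -> (\sum_(z : tseq) Nz z)%N = N ->
  (forall z, \sum_(i < N) h i z = 0) ->
  (#|assignments N Nz|%:R)^-1 * \sum_(Z in assignments N Nz) (\sum_(i < N) h i (Z i)) ^+ 2 =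
  \sum_(i < N) (\sum_(z : tseq) (Nz z)%:R / (N.-1)%:R * h i z ^+ 2
       - (N%:R * (N.-1)%:R)^-1 * (\sum_(z : tseq) (Nz z)%:R * h i z) ^+ 2).
Proof.
move=> HNz Hs Hc.
have N4 : (4 <= N)%N.
  rewrite -Hs sum_tseq_nat.
  by move: (HNz (true,true)) (HNz (true,false)) (HNz (false,true)) (HNz (false,false)); lia.
have nN0 : (N%:R : R) != 0 by rewrite pnatr_eq0 -lt0n; lia.
have nN10 : ((N.-1)%:R : R) != 0 by rewrite pnatr_eq0 -lt0n; lia.
have [Z0 HZ0] := assign_nonempty _ _ Hs.
have nM0 : (#|assignments N Nz|%:R : R) != 0.
  by rewrite pnatr_eq0 -lt0n; apply/card_gt0P; exists Z0.
have eN : (N%:R : R) = (N.-1)%:R + 1.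
  by rewrite natr1 prednK //; lia.
rewrite (eq_bigr _ (fun (Z : {ffun 'I_N -> tseq}) _ => @sqr_sum R N (fun i => h i (Z i)))) exchange_big mulr_sumr /=.
apply: eq_bigr => i _.
rewrite big_split /= exchange_big /=.
have e1 : \sum_(Z in assignments N Nz) h i (Z i) ^+ 2 =
   (N%:R)^-1 * (#|assignments N Nz|%:R * \sum_(z : tseq) h i z ^+ 2 * (Nz z)%:R).
  by rewrite -(E1 _ _ _ i (fun z => h i z ^+ 2)) mulKf.
have e2 : forall j, j != i -> \sum_(Z in assignments N Nz) h i (Z i) * h j (Z j) =
   (N%:R * (N.-1)%:R)^-1 * (#|assignments N Nz|%:R * \sum_(z : tseq) \sum_(z' : tseq)
     h i z * h j z' * ((Nz z)%:R * ((Nz z')%:R - (z == z')%:R))).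
  move=> j nji; rewrite -(E2 _ _ _ i j (h i) (h j)) 1?eq_sym //.
  by rewrite mulrA [_ * N%:R]mulrC mulKf // mulf_neq0.
rewrite e1 (eq_bigr _ e2) -mulr_sumr -mulr_sumr exchange_big /=.
have e3 : forall z, \sum_(j < N | j != i) \sum_(z' : tseq)
     h i z * h j z' * ((Nz z)%:R * ((Nz z')%:R - (z == z')%:R)) =
   - \sum_(z' : tseq) h i z * h i z' * ((Nz z)%:R * ((Nz z')%:R - (z == z')%:R)).
  move=> z; rewrite exchange_big /= -sumrN; apply: eq_bigr => z' _.
  rewrite (eq_bigr (fun j => h j z' * (h i z * ((Nz z)%:R * ((Nz z')%:R - (z == z')%:R))))); last by move=> j _; ring.
  rewrite -mulr_suml.
  have : \sum_(j < N) h j z' = 0 := Hc z'.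
  rewrite (bigD1 i) //= => /eqP; rewrite addr_eq0 => /eqP ->; ring.
rewrite (eq_bigr _ (fun z _ => e3 z)).
rewrite !sum_tseq /=.
move: nN0; rewrite eN => nN0.
field.
by rewrite nM0 nN10 nN0.
Qed.

Lemma sum_I2 (R : realFieldType) (F : 'I_2 -> R) : \sum_(t < 2) F t = F p1 + F p2.
Proof.
rewrite big_ord_recr big_ord1 /=; congr (F _ + F _); exact: val_inj.
Qed.

Definition Gw (R : realFieldType) N Nz (Y : pot_outcomes R N) (w : weights R) i z : R :=
  (w p1 z * Y i p1 z + w p2 z * Y i p2 z) / (Nz z)%:R.
Arguments Gw {R N}.

Lemma lin_est_eq (R : realFieldType) N Nz (Y : pot_outcomes R N) (w : weights R) Z :
  lin_est Nz Y w Z = \sum_(i < N) Gw Nz Y w i (Z i).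
Proof.
rewrite /lin_est sum_I2 -big_split /=.
rewrite (eq_bigr (fun i => \sum_(z : tseq) (Z i == z)%:R * Gw Nz Y w i z)); last first.
  by move=> i _; rewrite sum_pick.
rewrite exchange_big /=; apply: eq_bigr => z _.
rewrite /Yhat /Gw !mulr_sumr -big_split /=; apply: eq_bigr => i _.
by case: (eqVneq (Z i) z) => [->|ne] /=; ring.
Qed.

Lemma Expect_lin (R : realFieldType) N Nz (Y : pot_outcomes R N) (w : weights R) :
  (forall z, (0 < Nz z)%N) -> (\sum_(z : tseq) Nz z)%N = N ->
  Expect Nz (lin_est Nz Y w) =
  \sum_(z : tseq) (w p1 z * Ybar Y p1 z + w p2 z * Ybar Y p2 z).
Proof.
move=> HNz Hs.
have N4 : (4 <= N)%N.
  rewrite -Hs sum_tseq_nat.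
  by move: (HNz (true,true)) (HNz (true,false)) (HNz (false,true)) (HNz (false,false)); lia.
have nN0 : (N%:R : R) != 0 by rewrite pnatr_eq0 -lt0n; lia.
have [Z0 HZ0] := assign_nonempty _ _ Hs.
have nM0 : (#|assignments N Nz|%:R : R) != 0.
  by rewrite pnatr_eq0 -lt0n; apply/card_gt0P; exists Z0.
rewrite /Expect (eq_bigr _ (fun Z _ => lin_est_eq _ _ Nz Y w Z)) exchange_big mulr_sumr /=.
have e i : (#|assignments N Nz|%:R)^-1 * \sum_(Z in assignments N Nz) Gw Nz Y w i (Z i) =
   (N%:R)^-1 * \sum_(z : tseq) (w p1 z * Y i p1 z + w p2 z * Y i p2 z).
  rewrite -[\sum_(Z in _) _](mulKf nN0) E1 mulrCA mulKf //; congr (_ * _).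
  apply: eq_bigr => z _; rewrite /Gw mulfVK // pnatr_eq0 -lt0n; exact: HNz.
rewrite (eq_bigr _ (fun i _ => e i)) -mulr_sumr exchange_big mulr_sumr /=.
apply: eq_bigr => z _; rewrite big_split /= /Ybar -!mulr_sumr; ring.
Qed.

Lemma YbarN (R : realFieldType) N (Y : pot_outcomes R N) t z :
  (N%:R : R) != 0 -> Ybar Y t z *+ N = \sum_(i < N) Y i t z.
Proof. by move=> nN0; rewrite /Ybar -mulrnAl -(mulr_natl (N%:R)^-1) mulfV // mul1r. Qed.

Definition hw (R : realFieldType) N Nz (Y : pot_outcomes R N) (w : weights R) i z : R :=
  (w p1 z * (Y i p1 z - Ybar Y p1 z) + w p2 z * (Y i p2 z - Ybar Y p2 z)) / (Nz z)%:R.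
Arguments hw {R N}.

Lemma Var_lin (R : realFieldType) N Nz (Y : pot_outcomes R N) (w : weights R) :
  (forall z, (0 < Nz z)%N) -> (\sum_(z : tseq) Nz z)%N = N ->
  Var Nz (lin_est Nz Y w) =
  \sum_(i < N) (\sum_(z : tseq) (Nz z)%:R / (N.-1)%:R * hw Nz Y w i z ^+ 2
       - (N%:R * (N.-1)%:R)^-1 * (\sum_(z : tseq) (Nz z)%:R * hw Nz Y w i z) ^+ 2).
Proof.
move=> HNz Hs.
have N4 : (4 <= N)%N.
  rewrite -Hs sum_tseq_nat.
  by move: (HNz (true,true)) (HNz (true,false)) (HNz (false,true)) (HNz (false,false)); lia.
have nN0 : (N%:R : R) != 0 by rewrite pnatr_eq0 -lt0n; lia.
have nNz z : ((Nz z)%:R : R) != 0 by rewrite pnatr_eq0 -lt0n; exact: HNz.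
rewrite /Var Expect_lin // /Expect -(VarCore _ _ _ (hw Nz Y w) HNz Hs); last first.
  move=> z; rewrite /hw -mulr_suml big_split /= -!mulr_sumr !sumrB !sumr_const card_ord.
  have eY t : Ybar Y t z *+ N = \sum_(i < N) Y i t z by apply: YbarN.
  by rewrite !eY !subrr !mulr0 addr0 mul0r.
congr (_ * _); apply: eq_bigr => Z HZ; congr (_ ^+ 2).
have -> : \sum_(z : tseq) (w p1 z * Ybar Y p1 z + w p2 z * Ybar Y p2 z) =
    \sum_(i < N) (w p1 (Z i) * Ybar Y p1 (Z i) + w p2 (Z i) * Ybar Y p2 (Z i)) / (Nz (Z i))%:R.
  rewrite (eq_bigr (fun i => \sum_(z : tseq) (Z i == z)%:R *
     ((w p1 z * Ybar Y p1 z + w p2 z * Ybar Y p2 z) / (Nz z)%:R))); last first.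
    by move=> i _; rewrite sum_pick.
  rewrite exchange_big /=; apply: eq_bigr => z _.
  by rewrite -mulr_suml (sum_ind _ _ _ _ _ HZ) [RHS]mulrC divfK.
rewrite lin_est_eq -sumrB; apply: eq_bigr => i _; rewrite /Gw /hw; ring.
Qed.

Lemma key_alg (R : realFieldType) (w : weights R) (v1 v2 : tseq -> R) :
  constraints w ->
  (forall b c, v1 (b, c) = v1 (b, true)) -> (forall b c, v2 (b, c) = v2 (true, c)) ->
  v1 (true, true) - v1 (false, true) = v2 (true, true) - v2 (true, false) ->
  \sum_(z : tseq) (w p1 z * v1 z + w p2 z * v2 z) = v1 (true, true) - v1 (false, true).
Proof.
case=> C1 C2 C3 e1 e2 e3.
rewrite sum_tseq (e1 true false) (e1 false false) (e2 false true) (e2 false false).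
have h1 : w p1 (false, false) = - (w p1 (true, true) + w p1 (true, false) + w p1 (false, true)) by lra.
have h2 : w p2 (false, false) = - (w p2 (true, true) + w p2 (true, false) + w p2 (false, true)) by lra.
have h3 : w p1 (true, true) = 1 - (w p1 (true, false) + w p2 (true, true) + w p2 (false, true)) by lra.
have h4 : v2 (true, false) = v2 (true, true) - (v1 (true, true) - v1 (false, true)) by lra.
rewrite h1 h2 h4 h3; ring.
Qed.

Lemma S2_ext (R : realFieldType) N (Y : pot_outcomes R N) t z t' z' :
  (forall i, Y i t z = Y i t' z') -> S2 Y t z = S2 Y t' z'.
Proof.
move=> H; have eb : Ybar Y t z = Ybar Y t' z'.
  by rewrite /Ybar; congr (_ * _); apply: eq_bigr => i _; rewrite H.
by rewrite /S2 eb; congr (_ * _); apply: eq_bigr => i _; rewrite H.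
Qed.

Lemma Ybar_ext (R : realFieldType) N (Y : pot_outcomes R N) t z t' z' :
  (forall i, Y i t z = Y i t' z') -> Ybar Y t z = Ybar Y t' z'.
Proof. by move=> H; rewrite /Ybar; congr (_ * _); apply: eq_bigr => i _; rewrite H. Qed.

Lemma A2p1 (R : realFieldType) N (Y : pot_outcomes R N) :
  assumption2_k1 Y -> forall i b c, Y i p1 (b, c) = Y i p1 (b, true).
Proof. by move=> H i b c; apply: H. Qed.

Lemma A2p2 (R : realFieldType) N (Y : pot_outcomes R N) :
  assumption2_k1 Y -> forall i b c, Y i p2 (b, c) = Y i p2 (true, c).
Proof. by move=> H i b c; apply: H. Qed.

Lemma A3i (R : realFieldType) N (Y : pot_outcomes R N) :
  assumption3_k1 Y -> forall i,
  Y i p1 (true, true) - Y i p1 (false, true) = Y i p2 (true, true) - Y i p2 (true, false).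
Proof. by move=> H i; apply: (H i true false). Qed.

Lemma A3bar (R : realFieldType) N (Y : pot_outcomes R N) :
  assumption3_k1 Y ->
  Ybar Y p1 (true, true) - Ybar Y p1 (false, true) = Ybar Y p2 (true, true) - Ybar Y p2 (true, false).
Proof.
move=> H; rewrite /Ybar -!mulrBr -!sumrB; congr (_ * _).
by apply: eq_bigr => i _; apply: A3i.
Qed.

Lemma f_eq (R : realFieldType) N Nz (Y : pot_outcomes R N) (w : weights R) :
  (forall z, (0 < Nz z)%N) -> (\sum_(z : tseq) Nz z)%N = N -> assumption2_k1 Y ->
  \sum_(i < N) \sum_(z : tseq) (Nz z)%:R / (N.-1)%:R * hw Nz Y w i z ^+ 2 = f_obj Nz Y w.
Proof.
move=> HNz Hs H2.
have N4 : (4 <= N)%N.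
  rewrite -Hs sum_tseq_nat.
  by move: (HNz (true,true)) (HNz (true,false)) (HNz (false,true)) (HNz (false,false)); lia.
have nN10 : ((N.-1)%:R : R) != 0 by rewrite pnatr_eq0 -lt0n; lia.
have nNz z : ((Nz z)%:R : R) != 0 by rewrite pnatr_eq0 -lt0n; exact: HNz.
rewrite exchange_big /=.
have ez z : \sum_(i < N) (Nz z)%:R / (N.-1)%:R * hw Nz Y w i z ^+ 2 =
   (w p1 z ^+ 2 * S2 Y p1 z + w p2 z ^+ 2 * S2 Y p2 z + 2 * w p1 z * w p2 z * S12 Y z) / (Nz z)%:R.
  rewrite (eq_bigr (fun i => w p1 z ^+ 2 / ((Nz z)%:R * (N.-1)%:R) * (Y i p1 z - Ybar Y p1 z) ^+ 2
     + w p2 z ^+ 2 / ((Nz z)%:R * (N.-1)%:R) * (Y i p2 z - Ybar Y p2 z) ^+ 2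
     + 2 * w p1 z * w p2 z / ((Nz z)%:R * (N.-1)%:R) * ((Y i p1 z - Ybar Y p1 z) * (Y i p2 z - Ybar Y p2 z)))); last first.
    move=> i _; rewrite /hw; field; by rewrite nNz nN10.
  rewrite !big_split /= -!mulr_sumr /S2 /S12; field; by rewrite nNz nN10.
rewrite (eq_bigr _ (fun z _ => ez z)) sum_tseq /f_obj !big_bool /S2_1 /S2_2 /Nr /=.
rewrite (@S2_ext R N Y p1 (true,false) p1 (true,true)); last by move=> i; apply: A2p1.
rewrite (@S2_ext R N Y p1 (false,false) p1 (false,true)); last by move=> i; apply: A2p1.
rewrite (@S2_ext R N Y p2 (false,true) p2 (true,true)); last by move=> i; apply: A2p2.
rewrite (@S2_ext R N Y p2 (false,false) p2 (true,false)); last by move=> i; apply: A2p2.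
field.
by rewrite !nNz.
Qed.

Lemma D_eq (R : realFieldType) N Nz (Y : pot_outcomes R N) (w : weights R) i :
  (forall z, (0 < Nz z)%N) -> assumptions Y -> constraints w ->
  \sum_(z : tseq) (Nz z)%:R * hw Nz Y w i z =
  (Y i p1 (true, true) - Ybar Y p1 (true, true)) - (Y i p1 (false, true) - Ybar Y p1 (false, true)).
Proof.
move=> HNz [H1 H2 H3] Cw.
have nNz z : ((Nz z)%:R : R) != 0 by rewrite pnatr_eq0 -lt0n; exact: HNz.
rewrite (eq_bigr (fun z => w p1 z * (Y i p1 z - Ybar Y p1 z) + w p2 z * (Y i p2 z - Ybar Y p2 z))); last first.
  by move=> z _; rewrite /hw mulrC divfK.
apply: (@key_alg R w (fun z => Y i p1 z - Ybar Y p1 z) (fun z => Y i p2 z - Ybar Y p2 z)) => //.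
- move=> b c /=; rewrite (A2p1 _ _ _ H2) (@Ybar_ext R N Y p1 (b,c) p1 (b,true)) //.
  by move=> j; apply: A2p1.
- move=> b c /=; rewrite (A2p2 _ _ _ H2) (@Ybar_ext R N Y p2 (b,c) p2 (true,c)) //.
  by move=> j; apply: A2p2.
- have := A3i _ _ _ H3 i; have := A3bar _ _ _ H3 => /= ea eb; lra.
Qed.

Definition Cst (R : realFieldType) N (Y : pot_outcomes R N) : R :=
  \sum_(i < N) (N%:R * (N.-1)%:R)^-1 *
    ((Y i p1 (true, true) - Ybar Y p1 (true, true)) - (Y i p1 (false, true) - Ybar Y p1 (false, true))) ^+ 2.
Arguments Cst {R N}.

Lemma Var_eq (R : realFieldType) N Nz (Y : pot_outcomes R N) (w : weights R) :
  (forall z, (0 < Nz z)%N) -> (\sum_(z : tseq) Nz z)%N = N -> assumptions Y -> constraints w ->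
  Var Nz (lin_est Nz Y w) = f_obj Nz Y w - Cst Y.
Proof.
move=> HNz Hs HA Cw.
rewrite Var_lin // sumrB f_eq //; last by case: HA.
congr (_ - _); apply: eq_bigr => i _; by rewrite D_eq.
Qed.

Lemma constr_unbiased (R : realFieldType) N Nz (w : weights R) :
  (forall z, (0 < Nz z)%N) -> (\sum_(z : tseq) Nz z)%N = N -> constraints w ->
  unbiased N Nz w.
Proof.
move=> HNz Hs Cw Y [H1 H2 H3]; rewrite Expect_lin // /tau.
apply: (@key_alg R w (fun z => Ybar Y p1 z) (fun z => Ybar Y p2 z)) => //.
- move=> b c /=; apply: Ybar_ext => j; exact: A2p1.
- move=> b c /=; apply: Ybar_ext => j; exact: A2p2.
- exact: A3bar.
Qed.

Definition Ycf (R : realFieldType) (a b c d : R) (t : 'I_2) (z : tseq) : R :=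
  if val t == 0%N then (if trt_at z t then a else b) else (if trt_at z t then c else d).
Arguments Ycf {R}.

Definition Yc (R : realFieldType) N (a b c d : R) : pot_outcomes R N :=
  fun i t z => Ycf a b c d t z.
Arguments Yc {R}.

Lemma Yc_ass (R : realFieldType) N (a b c d : R) : a - b = c - d ->
  assumptions (Yc N a b c d).
Proof.
move=> e; split.
- by move=> i z z' /= ez; rewrite /Yc /Ycf /trt_at /= ez.
- by move=> i t z z' ez; rewrite /Yc /Ycf ez.
- move=> i a' b' z z' u u' e1 e2 e3 e4; rewrite /Yc /Ycf /trt_at /= e1 e2 e3 e4.
  by case: a' e1 e3; case: b' e2 e4 => //; rewrite ?subrr // -opprB e opprB.
Qed.

Lemma Yc_bar (R : realFieldType) N (a b c d : R) t z : (N%:R : R) != 0 ->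
  Ybar (Yc N a b c d) t z = Ycf a b c d t z.
Proof.
move=> nN0; rewrite /Ybar /Yc sumr_const card_ord mulrnAr -mulrnAl.
by rewrite -(mulr_natr (N%:R)^-1 N) mulVf // mul1r.
Qed.

Lemma unbiased_constr (R : realFieldType) N Nz (w : weights R) :
  (forall z, (0 < Nz z)%N) -> (\sum_(z : tseq) Nz z)%N = N -> unbiased N Nz w ->
  constraints w.
Proof.
move=> HNz Hs Hu.
have N4 : (4 <= N)%N.
  rewrite -Hs sum_tseq_nat.
  by move: (HNz (true,true)) (HNz (true,false)) (HNz (false,true)) (HNz (false,false)); lia.
have nN0 : (N%:R : R) != 0 by rewrite pnatr_eq0 -lt0n; lia.
have inst a b c d : a - b = c - d ->
   \sum_(z : tseq) (w p1 z * Ycf a b c d p1 z + w p2 z * Ycf a b c d p2 z) = a - b.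
  move=> e; have := Hu (Yc N a b c d) (Yc_ass _ N _ _ _ _ e).
  rewrite Expect_lin // /tau !Yc_bar //.
  by under eq_bigr => z _ do rewrite !Yc_bar //.
have E1 := inst 1 0 1 0 erefl.
have E2 := inst 0 1 0 1 erefl.
have E3 : \sum_(z : tseq) (w p1 z * Ycf 0 0 1 1 p1 z + w p2 z * Ycf 0 0 1 1 p2 z) = 0 - 0.
  by apply: inst; rewrite !subrr.
move: E1 E2 E3; rewrite !sum_tseq /Ycf /trt_at /= => E1 E2 E3.
split; lra.
Qed.

Theorem proposition3 (R : realFieldType) (N : nat) (Nz : tseq -> nat)
    (Y : pot_outcomes R N) (w : weights R) :
  (forall z : tseq, (0 < Nz z)%N) ->
  (\sum_(z : tseq) Nz z)%N = N ->
  assumptions Y ->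
  (BLUE Nz Y w <->
   (constraints w /\
    forall w' : weights R, constraints w' -> f_obj Nz Y w <= f_obj Nz Y w')).
Proof.
move=> HNz Hs HA; split.
- case=> Hu Hmin.
  have Cw := unbiased_constr _ _ _ _ HNz Hs Hu.
  split=> // w' Cw'.
  have := Hmin w' (constr_unbiased _ _ _ _ HNz Hs Cw').
  rewrite !Var_eq // lerD2r; done.
- case=> Cw Hmin; split; first exact: constr_unbiased.
  move=> w' Hu'; have Cw' := unbiased_constr _ _ _ _ HNz Hs Hu'.
  by rewrite !Var_eq // lerD2r; apply: Hmin.
Qed.
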